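(* The sequence of jumping polynomials $\{T_i\}_{i\ge0}$ in $S$ is well defined: at every step $i\ge1$ the required nonnegative integers $n_{i,j}$ exist (and are unique), the residue $\lambda_i\in k$ is defined, and $T_{i+1}$, $p_{i+1}$, $q_{i+1}$ can be chosen as prescribed.
   Context: Setting: $k$ (the field) is algebraically closed of characteristic $0$; $\nu^*$ is a $k$-valuation of a function field $K^*$ of transcendence degree $2$ with valuation ring $V^*$, value group a subgroup of $\mathbb{Q}$, and residue field $V^*/m_{V^*}=k$; $S$ is an algebraic two-dimensional regular local ring with quotient field $K^*$ dominated by $V^*$, with regular parameters $(x,y)$, and $\nu^*$ is normalized so that $\nu^*(x)=1$. The prescribed construction of jumping polynomials: $T_0=x$, $T_1=y$, $q_0=\infty$, $p_1,q_1$ coprime positive integers with $\nu^*(y)=p_1/q_1$; for $i\ge1$, choose nonnegative integers $n_{i,j}$ ($0\le j<i$) with $n_{i,j}<q_j$ and $q_i\nu^*(T_i)=\sum_{j<i}n_{i,j}\nu^*(T_j)$, let $\lambda_i\in k$ be the residue of $T_i^{q_i}/\prod_{j<i}T_j^{n_{i,j}}$, set $T_{i+1}=T_i^{q_i}-\lambda_i\prod_{j<i}T_j^{n_{i,j}}$, and choose coprime positive integers $p_{i+1},q_{i+1}$ with $\nu^*(T_{i+1})=q_i\nu^*(T_i)+\frac{1}{q_1\cdots q_i}\frac{p_{i+1}}{q_{i+1}}$. *)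

(* Defs.v *)
From HB Require Import structures.
From mathcomp Require Import all_boot all_order all_algebra.
From mathcomp Require Import mpoly.
Set Implicit Arguments. Unset Strict Implicit. Unset Printing Implicit Defensive.
Import Order.TTheory GRing.Theory Num.Theory.
Local Open Scope ring_scope.

(* The field k is embedded in K* via the injective ring morphism iota;
   subsets of K* (subrings, ideals) are Prop-valued predicates. *)

Section Defs.
Variables (k K : fieldType) (iota : {rmorphism k -> K}).

Definition meval_k (n : nat) (g : 'I_n -> K) (p : {mpoly k[n]}) : K :=
  (map_mpoly iota p).@[g].

Definition alg_indep (s : seq K) : Prop :=
  forall p : {mpoly k[size s]}, meval_k (fun i => s`_i) p = 0 -> p = 0.

Definition fin_gen_field : Prop :=
  exists n (g : 'I_n -> K), forall z, exists p q : {mpoly k[n]},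
    meval_k g q != 0 /\ z = meval_k g p / meval_k g q.

Definition trdeg2 : Prop :=
  exists a b : K, alg_indep [:: a; b] /\ forall z, ~ alg_indep [:: a; b; z].

Definition function_field_trdeg2 : Prop := fin_gen_field /\ trdeg2.

(* k-valuations of K with values in Q (nu is only meaningful on nonzero elements) *)
Definition is_k_valuation (nu : K -> rat) : Prop :=
  [/\ forall a b, a != 0 -> b != 0 -> nu (a * b) = nu a + nu b,
      forall a b, a != 0 -> b != 0 -> a + b != 0 ->
        Num.min (nu a) (nu b) <= nu (a + b)
    & forall c, c != 0 -> nu (iota c) = 0].

Definition valring (nu : K -> rat) (a : K) : Prop := a = 0 \/ 0 <= nu a.
Definition valmax (nu : K -> rat) (a : K) : Prop := a = 0 \/ 0 < nu a.

(* residue field V/m_V = k, i.e. k -> V/m_V is onto *)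
Definition residue_field_is_k (nu : K -> rat) : Prop :=
  forall a, valring nu a -> exists c : k, valmax nu (a - iota c).

Definition is_ideal (R I : K -> Prop) : Prop :=
  [/\ forall a, I a -> R a, I 0,
      forall a b, I a -> I b -> I (a + b)
    & forall r a, R r -> I a -> I (r * a)].

Definition is_prime_ideal (R I : K -> Prop) : Prop :=
  [/\ is_ideal R I, ~ I 1 &
      forall a b, R a -> R b -> I (a * b) -> I a \/ I b].

Definition fin_gen_ideal (R I : K -> Prop) : Prop :=
  exists s : seq K, forall a, I a <->
    exists c : 'I_(size s) -> K, (forall j, R (c j)) /\
      a = \sum_(j < size s) c j * s`_j.

Definition noetherian (R : K -> Prop) : Prop :=
  forall I, is_ideal R I -> fin_gen_ideal R I.

Definition strict_incl (P Q : K -> Prop) : Prop :=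
  (forall a, P a -> Q a) /\ exists a, Q a /\ ~ P a.

Definition krull_dim2 (R : K -> Prop) : Prop :=
  (exists P0 P1 P2, [/\ is_prime_ideal R P0, is_prime_ideal R P1,
       is_prime_ideal R P2, strict_incl P0 P1 & strict_incl P1 P2]) /\
  ~ (exists P0 P1 P2 P3, [/\ is_prime_ideal R P0, is_prime_ideal R P1,
       is_prime_ideal R P2, is_prime_ideal R P3 &
       [/\ strict_incl P0 P1, strict_incl P1 P2 & strict_incl P2 P3]]).

Definition unitS (R : K -> Prop) (a : K) : Prop := R a /\ a != 0 /\ R a^-1.

(* S is a two-dimensional regular local ring with regular parameters (x, y):
   Noetherian, local with maximal ideal (the non-units) equal to (x, y),
   of Krull dimension 2. *)
Definition regular_local_2 (S : K -> Prop) (x y : K) : Prop :=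
  [/\ noetherian S, S x, S y, krull_dim2 S &
      forall a, S a -> (~ unitS S a <->
        exists s t, [/\ S s, S t & a = x * s + y * t])].

(* S is algebraic: a localization of a finitely generated k-algebra at a prime *)
Definition algebraic_local_ring (S : K -> Prop) : Prop :=
  exists n (g : 'I_n -> K) (P : K -> Prop),
    let A := fun a => exists p : {mpoly k[n]}, a = meval_k g p in
    is_prime_ideal A P /\
    forall z, S z <-> exists a b, [/\ A a, A b, ~ P b & z = a / b].

Definition quotient_field (S : K -> Prop) : Prop :=
  forall z, exists a b, [/\ S a, S b, b != 0 & z = a / b].

Definition dominates (nu : K -> rat) (S : K -> Prop) : Prop :=
  (forall a, S a -> valring nu a) /\
  (forall a, S a -> ~ unitS S a -> valmax nu a).

Definition mprod (T : nat -> K) (i : nat) (nn : nat -> nat) : K :=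
  \prod_(j < i) T j ^+ nn j.

(* the condition on (n_{i,j})_{j<i}: n_{i,j} < q_j for 1 <= j < i (q_0 = oo) and
   q_i nu(T_i) = sum_{j<i} n_{i,j} nu(T_j) *)
Definition ncond (nu : K -> rat) (T : nat -> K) (q : nat -> nat) (i : nat)
    (nn : nat -> nat) : Prop :=
  (forall j, (0 < j < i)%N -> (nn j < q j)%N) /\
  (q i)%:R * nu (T i) = \sum_(j < i) (nn j)%:R * nu (T j).

Definition qprod (q : nat -> nat) (l : nat) : nat := (\prod_(1 <= j < l.+1) q j)%N.

Definition jump_ratio (T : nat -> K) (q : nat -> nat) (i : nat) (nn : nat -> nat) : K :=
  T i ^+ q i / mprod T i nn.

Definition is_residue (nu : K -> rat) (a : K) (lam : k) : Prop :=
  valmax nu (a - iota lam).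

Definition history (nu : K -> rat) (x y : K) (T : nat -> K) (p q : nat -> nat)
    (n : nat -> nat -> nat) (lam : nat -> k) (i : nat) : Prop :=
  [/\ T 0%N = x /\ T 1%N = y,
      forall l, (l <= i)%N -> T l != 0,
      forall l, (0 < l <= i)%N -> [/\ (0 < p l)%N, (0 < q l)%N & coprime (p l) (q l)],
      nu (T 1%N) = (p 1%N)%:R / (q 1%N)%:R &
      forall l, (0 < l < i)%N ->
        [/\ ncond nu T q l (n l),
            is_residue nu (jump_ratio T q l (n l)) (lam l),
            T l.+1 = T l ^+ q l - iota (lam l) * mprod T l (n l) &
            nu (T l.+1) = (q l)%:R * nu (T l) +
              ((qprod q l)%:R)^-1 * ((p l.+1)%:R / (q l.+1)%:R)]].

End Defs.

(* Main.v *)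
Require Import Defs.
From HB Require Import structures.
From mathcomp Require Import all_boot all_order all_algebra.
From mathcomp Require Import mpoly.
From mathcomp Require Import ring lra zify.
From Stdlib Require Import ClassicalEpsilon Classical.
Set Implicit Arguments. Unset Strict Implicit. Unset Printing Implicit Defensive.
Import Order.TTheory GRing.Theory Num.Theory.
Local Open Scope ring_scope.

Section Closure.
Variables (k K : fieldType) (iota : {rmorphism k -> K}) (S : K -> Prop).

Record subring : Prop := SubRing {
  S0 : S 0; S1 : S 1;
  SD : forall a b, S a -> S b -> S (a + b);
  SN : forall a, S a -> S (- a);
  SM : forall a b, S a -> S b -> S (a * b);
  SC : forall c, S (iota c) }.

Lemma alg_subring : algebraic_local_ring iota S -> subring.
Proof.
case=> n [g [P [[[PA P0 PD PM] P1 Pp] HS]]].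
set A := fun a => exists p : {mpoly k[n]}, a = meval_k iota g p.
have AD a b : A a -> A b -> A (a + b).
  by case=> p -> [q ->]; exists (p + q); rewrite /meval_k rmorphD mevalD.
have AM a b : A a -> A b -> A (a * b).
  by case=> p -> [q ->]; exists (p * q); rewrite /meval_k rmorphM mevalM.
have AN a : A a -> A (- a).
  by case=> p ->; exists (- p); rewrite /meval_k rmorphN mevalN.
have AC c : A (iota c).
  by exists c%:MP; rewrite /meval_k map_mpolyC mevalC.
have A1 : A 1 by rewrite -(rmorph1 iota).
have nP1 : ~ P 1 := P1.
have ex a b : A a -> A b -> ~ P b -> S (a / b).
  by move=> Aa Ab nPb; apply/HS; exists a, b; split.
have bnz b : ~ P b -> b != 0 by move=> nPb; apply/eqP=> b0; apply: nPb; rewrite b0.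
have hS z : S z -> exists a b, [/\ A a, A b, ~ P b & z = a / b] by move/HS.
split.
- by rewrite -(mul0r 1^-1); apply: ex => //; rewrite -(rmorph0 iota).
- by rewrite -(divr1 1); apply: ex.
- move=> a b /hS [a1 [b1 [Aa1 Ab1 nb1 ->]]] /hS [a2 [b2 [Aa2 Ab2 nb2 ->]]].
  have nb : ~ P (b1 * b2) by move=> /Pp [] // /AM; apply.
  rewrite (_ : _ + _ = (a1 * b2 + a2 * b1) / (b1 * b2)); first by apply: ex => //; auto.
  by field; rewrite ?bnz.
- move=> a /hS [a1 [b1 [Aa1 Ab1 nb1 ->]]].
  by rewrite -mulNr; apply: ex => //; apply: AN.
- move=> a b /hS [a1 [b1 [Aa1 Ab1 nb1 ->]]] /hS [a2 [b2 [Aa2 Ab2 nb2 ->]]].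
  have nb : ~ P (b1 * b2) by move=> /Pp [] // /AM; apply.
  rewrite (_ : _ * _ = (a1 * a2) / (b1 * b2)); first by apply: ex => //; auto.
  by field; rewrite ?bnz.
- by move=> c; rewrite -(divr1 (iota c)); apply: ex.
Qed.
End Closure.

Section Elim.
Variables (K : fieldType) (S G B J : K -> Prop).
Hypotheses (SB_ : forall a, B a -> S a) (SG_ : forall a, G a -> S a)
  (GB : forall g c, G g -> B c -> G (g - c)) (GM : forall g h, G g -> G h -> G (g * h))
  (BM : forall a b, B a -> S b -> B (b * a)) (BD : forall a b, B a -> B b -> B (a + b))
  (JM : forall a b, J a -> S b -> J (b * a)) (JD : forall a b, J a -> J b -> J (a + b))
  (J0 : J 0).

Lemma Jsum r (F : 'I_r -> K) : (forall l, J (F l)) -> J (\sum_(l < r) F l).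
Proof.
move=> H; apply: (big_rec J) => // l x _ Jx; apply: JD => //.
Qed.

Lemma elim_lemma r : forall (w : K) (s b : nat -> K) (c : nat -> nat -> K),
  G w -> (forall i l, B (c i l)) -> (forall i, (i < r)%N -> J (b i)) ->
  (forall i, (i < r)%N -> w * s i = b i + \sum_(l < r) c i l * s l) ->
  exists g, G g /\ forall i, (i < r)%N -> J (g * s i).
Proof.
elim: r => [|r IH] w s b c Gw Bc Jb Heq.
  by exists w; split.
set u := w - c r r.
have Gu : G u by apply: GB.
have Su : S u by apply: SG_.
have eqr : u * s r = b r + \sum_(l < r) c r l * s l.
  by rewrite /u mulrBl Heq // big_ord_recr /=; ring.
have Heq' : forall i, (i < r)%N -> (u * w) * s i = (u * b i + c i r * b r) + \sum_(l < r) (u * c i l + c i r * c r l) * s l.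
  move=> i Hi.
  have Hi' : (i < r.+1)%N by apply: ltnW.
  rewrite (eq_bigr (fun l : 'I_r => u * (c i l * s l) + c i r * (c r l * s l))); last by move=> l _; ring.
  rewrite big_split /= -!big_distrr /= -mulrA Heq // big_ord_recr /=.
  have -> : \sum_(l < r) c r l * s l = u * s r - b r by rewrite eqr; ring.
  by ring.
have [g [Gg Hg]] := IH (u * w) s (fun i => u * b i + c i r * b r)
   (fun i l => u * c i l + c i r * c r l) (GM Gu Gw)
   (fun i l => BD (BM (Bc i l) Su) (BM (Bc r l) (SB_ (Bc i r))))
   (fun i Hi => JD (JM (Jb i (ltn_trans Hi (ltnSn r))) Su)
                   (JM (Jb r (ltnSn r)) (SB_ (Bc i r)))) Heq'.
  exists (g * u); split; first by apply: GM.
move=> i; rewrite ltnS leq_eqVlt => /orP [/eqP ->|Hi].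
  rewrite -mulrA eqr mulrDr big_distrr /=; apply: JD.
    exact: (JM (Jb r (ltnSn r)) (SG_ Gg)).
  apply: Jsum => l.
  rewrite mulrCA; apply: JM; last by apply: SB_.
  exact: (Hg l (ltn_ord l)).
by rewrite -mulrA mulrCA; exact: (JM (Hg i Hi) Su).
Qed.
End Elim.

Definition mm (K : fieldType) (S : K -> Prop) (u v a : K) :=
  exists s t, [/\ S s, S t & a = u * s + v * t].

Definition prodI (K : fieldType) (I J : K -> Prop) (a : K) :=
  exists l : seq (K * K), (forall pr, pr \in l -> I pr.1 /\ J pr.2) /\
     a = \sum_(pr <- l) pr.1 * pr.2.

Fixpoint Pw (K : fieldType) (S Q : K -> Prop) (n : nat) : K -> Prop :=
  match n with 0 => S | n'.+1 => prodI Q (Pw S Q n') end.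

Definition Qs (K : fieldType) (S Q : K -> Prop) (u : K) (n : nat) (a : K) :=
  S a /\ exists j, Pw S Q n (u ^+ j * a).

Definition addU (K : fieldType) (S I : K -> Prop) (u : K) (a : K) :=
  exists b s, [/\ I b, S s & a = b + u * s].

Definition conv (K : fieldType) r (f : 'I_r -> K) (n : nat) : K :=
  if insub n is Some o then f o else 0.

Lemma convE (K : fieldType) r (f : 'I_r -> K) (o : 'I_r) : conv f o = f o.
Proof. by rewrite /conv valK. Qed.

Lemma fchoice (A B : Type) (P : A -> B -> Prop) :
  (forall a, exists b, P a b) -> exists f : A -> B, forall a, P a (f a).
Proof.
move=> H; exists (fun a => proj1_sig (constructive_indefinite_description _ (H a))).
by move=> a; case: (constructive_indefinite_description _ (H a)).
Qed.

Section Core.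
Variables (k K : fieldType) (iota : {rmorphism k -> K}) (S : K -> Prop) (u v : K).
Hypothesis HS : subring iota S.
Hypotheses (Su : S u) (Sv : S v).
Hypothesis Hloc : forall a, S a -> (~ unitS S a <-> mm S u v a).
Hypothesis Hnoeth : noetherian S.
Hypothesis Hres : forall a, S a -> exists c, mm S u v (a - iota c).

Let S0 := S0 HS. Let S1 := S1 HS. Let SD := SD HS. Let SN := SN HS.
Let SM := SM HS. Let SC := SC HS.

Lemma SB a b : S a -> S b -> S (a - b).
Proof. by move=> *; apply: SD => //; apply: SN. Qed.

Lemma SX a n : S a -> S (a ^+ n).
Proof. by move=> Sa; elim: n => [|n IH]; rewrite ?expr0 ?exprS //; apply: SM. Qed.

Lemma Ssum (I : Type) (l : seq I) (F : I -> K) :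
  (forall x, S (F x)) -> S (\sum_(x <- l) F x).
Proof. by move=> H; apply: (big_rec S) => // *; apply: SD. Qed.

Lemma mm_S a : mm S u v a -> S a.
Proof. by case=> s [t [Ss St ->]]; apply: SD; apply: SM. Qed.

Lemma mmD a b : mm S u v a -> mm S u v b -> mm S u v (a + b).
Proof.
case=> s [t [Ss St ->]] [s' [t' [Ss' St' ->]]].
by exists (s + s'), (t + t'); split; try apply: SD => //; ring.
Qed.

Lemma mmN a : mm S u v a -> mm S u v (- a).
Proof.
case=> s [t [Ss St ->]].
by exists (- s), (- t); split; try apply: SN => //; ring.
Qed.

Lemma mmM a b : mm S u v a -> S b -> mm S u v (b * a).
Proof.
case=> s [t [Ss St ->]] Sb.
by exists (b * s), (b * t); split; try apply: SM => //; ring.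
Qed.

Lemma unit_notm a : unitS S a -> ~ mm S u v a.
Proof. by move=> Ua Ma; have := (Hloc (proj1 Ua)).2 Ma. Qed.

Lemma notm_unit a : S a -> ~ mm S u v a -> unitS S a.
Proof.
move=> Sa nM; apply: NNPP => nU; apply: nM; exact: (Hloc Sa).1.
Qed.

Lemma unitC c : c != 0 -> unitS S (iota c).
Proof.
move=> c0; split; first exact: SC.
split; first by rewrite fmorph_eq0.
by rewrite -fmorphV; apply: SC.
Qed.

Lemma unitM a b : unitS S a -> unitS S b -> unitS S (a * b).
Proof.
move=> [Sa [a0 Sa']] [Sb [b0 Sb']]; split; first exact: SM.
split; first by rewrite mulf_neq0.
by rewrite invfM; apply: SM.
Qed.

Lemma unitBm a c : unitS S a -> mm S u v c -> unitS S (a - c).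
Proof.
move=> Ua Mc; apply: notm_unit; first by apply: SB => //; [case: Ua | apply: mm_S].
move=> M; apply: (unit_notm Ua).
by rewrite -(subrK c a); apply: mmD.
Qed.

Lemma ideal_unit I a : is_ideal S I -> I a -> unitS S a -> I 1.
Proof.
move=> [_ _ _ IM] Ia [Sa [a0 Sa']].
by rewrite -(mulVf a0); apply: IM.
Qed.

Lemma ideal_sum I (T : eqType) (l : seq T) (F : T -> K) :
  is_ideal S I -> (forall x, x \in l -> I (F x)) -> I (\sum_(x <- l) F x).
Proof.
move=> [_ I0 ID _]; elim: l => [|x l IH] H; first by rewrite big_nil.
rewrite big_cons; apply: ID; first by apply: H; rewrite inE eqxx.
by apply: IH => y yl; apply: H; rewrite inE yl orbT.
Qed.

Lemma ideal_S : is_ideal S S.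
Proof. by split => // *; apply: SM. Qed.

Lemma ideal_M I a b : is_ideal S I -> I a -> S b -> I (a * b).
Proof. by move=> [_ _ _ IM] Ia Sb; rewrite mulrC; apply: IM. Qed.

Lemma ideal_B I a b : is_ideal S I -> I a -> I b -> I (a - b).
Proof.
move=> HI Ia Ib; have [_ _ ID IM] := HI; apply: ID => //.
by rewrite -mulN1r; apply: IM => //; apply: SN.
Qed.

Section Powers.
Variable Q : K -> Prop.
Hypothesis HQ : is_prime_ideal S Q.
Hypothesis Qnu : ~ Q u.

Let QI : is_ideal S Q. Proof. by case: HQ. Qed.

Lemma Pw_ideal n : is_ideal S (Pw S Q n).
Proof.
elim: n => [|n IH] /=; first exact: ideal_S.
have SPw : forall a, Pw S Q n a -> S a by case: IH.
have [QS _ _ QM] := QI.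
split.
- move=> a [l [Hl ->]]; apply: (ideal_sum ideal_S) => pr /Hl [Q1 P2].
  by apply: SM; [apply: QS | apply: SPw].
- by exists [::]; rewrite big_nil.
- move=> a b [l1 [H1 ->]] [l2 [H2 ->]]; exists (l1 ++ l2); rewrite big_cat; split => //.
  by move=> pr; rewrite mem_cat => /orP [/H1|/H2].
- move=> r a Sr [l [Hl ->]]; exists (map (fun pr => (r * pr.1, pr.2)) l); split.
    move=> pr /mapP [pr' Hpr' ->] /=; have [Q1 P2] := Hl _ Hpr'; split => //.
    by apply: QM.
  by rewrite big_map big_distrr /=; apply: eq_bigr => *; rewrite mulrA.
Qed.

Lemma Pw_S n a : Pw S Q n a -> S a.
Proof. by have [H _ _ _] := Pw_ideal n; apply: H. Qed.

Lemma Pw_sub n a : Pw S Q n.+1 a -> Pw S Q n a.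
Proof.
move=> [l [Hl ->]]; apply: ideal_sum; first exact: Pw_ideal.
move=> pr /Hl [Q1 P2]; have [QS _ _ _] := QI.
by rewrite mulrC; apply: ideal_M => //; [apply: Pw_ideal | apply: QS].
Qed.

Lemma Pw_Q n a : Pw S Q n.+1 a -> Q a.
Proof.
move=> [l [Hl ->]]; apply: ideal_sum => // pr /Hl [Q1 P2].
by apply: ideal_M => //; apply: (Pw_S P2).
Qed.

Lemma Pw_pow n a : Q a -> Pw S Q n (a ^+ n).
Proof.
move=> Qa; elim: n => [|n IH] /=; first by rewrite expr0.
exists [:: (a, a ^+ n)]; split; last by rewrite big_seq1 exprS.
by move=> pr; rewrite inE => /eqP -> /=.
Qed.

Lemma Qs_ideal n : is_ideal S (Qs S Q u n).
Proof.
have [PS P0 PD PM] := Pw_ideal n.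
split.
- by move=> a [].
- by split => //; exists 0%N; rewrite mulr0.
- move=> a b [Sa [j1 H1]] [Sb [j2 H2]]; split; first by apply: SD.
  exists (j1 + j2)%N.
  have -> : u ^+ (j1 + j2) * (a + b) = u ^+ j2 * (u ^+ j1 * a) + u ^+ j1 * (u ^+ j2 * b).
    by rewrite exprD; ring.
  by apply: PD; apply: PM => //; apply: SX.
- move=> r a Sr [Sa [j H]]; split; first by apply: SM.
  by exists j; rewrite mulrCA; apply: PM.
Qed.

Lemma Qs_sub n a : Qs S Q u n.+1 a -> Qs S Q u n a.
Proof. by move=> [Sa [j H]]; split => //; exists j; apply: Pw_sub. Qed.

Lemma Qs_sat n c : S c -> Qs S Q u n (u * c) -> Qs S Q u n c.
Proof. by move=> Sc [_ [j H]]; split => //; exists j.+1; rewrite exprSr -mulrA. Qed.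

Lemma Pw_Qs n a : Pw S Q n a -> Qs S Q u n a.
Proof. by move=> H; split; [apply: Pw_S H | exists 0%N; rewrite expr0 mul1r]. Qed.

Lemma addU_ideal I : is_ideal S I -> is_ideal S (addU S I u).
Proof.
move=> HI; have [IS I0 ID IM] := HI.
split.
- by move=> a [b [s [Ib Ss ->]]]; apply: SD; [apply: IS | apply: SM].
- by exists 0, 0; split => //; ring.
- move=> a b [b1 [s1 [I1 S1' ->]]] [b2 [s2 [I2 S2' ->]]].
  by exists (b1 + b2), (s1 + s2); split; [apply: ID | apply: SD | ring].
- move=> r a Sr [b [s [Ib Ss ->]]].
  by exists (r * b), (r * s); split; [apply: IM | apply: SM | ring].
Qed.

Lemma addU_l I a : is_ideal S I -> I a -> addU S I u a.
Proof. by move=> HI Ia; exists a, 0; split => //; ring. Qed.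

Lemma addU_r I s : is_ideal S I -> S s -> addU S I u (u * s).
Proof. by move=> [_ I0 _ _] Ss; exists 0, s; split => //; ring. Qed.


Lemma ideal_big I r (F : 'I_r -> K) : is_ideal S I -> (forall j, I (F j)) -> I (\sum_(j < r) F j).
Proof.
move=> [_ I0 ID _] H; apply: (big_rec I) => // j x _ Ix; apply: ID => //.
Qed.

Lemma lemL (J' : K -> Prop) : is_ideal S J' -> (forall s, S s -> J' (u * s)) ->
  forall e, (forall j, (j < e)%N -> ~ J' (v ^+ j)) ->
  forall a, J' a -> exists t s, [/\ S t, S s & a = v ^+ e * t + u * s].
Proof.
move=> HJ HuJ; have [JS J0 JD JM] := HJ.
elim=> [|e IH] Hj a Ja.
  by exists a, 0; split => //; [apply: JS | rewrite expr0; ring].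
have [t [s [St Ss Ha]]] := IH (fun j Hj' => Hj j (ltn_trans Hj' (ltnSn e))) a Ja.
have [c [s' [t' [Ss' St' Hc]]]] := Hres St.
case: (eqVneq c 0) => [c0|c0].
  exists t', (s + v ^+ e * s'); split => //.
  - by apply: SD => //; apply: SM => //; apply: SX.
  - move: Hc; rewrite c0 rmorph0 subr0 => Ht.
    by rewrite Ha Ht exprSr; ring.
exfalso; apply: (Hj e (ltnSn e)).
set w0 := iota c + v * t'.
have Uw : unitS S w0.
  have -> : w0 = iota c - (- (v * t')) by rewrite /w0; ring.
  apply: unitBm; first exact: unitC.
  by apply: mmN; exists 0, t'; split => //; ring.
have [Sw [w00 Sw']] := Uw.
have -> : v ^+ e = w0^-1 * (a - u * (s + v ^+ e * s')).
  apply: (mulfI w00); rewrite mulrA mulfV // mul1r Ha.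
  have -> : t = iota c + u * s' + v * t' by rewrite -addrA -Hc; ring.
  by rewrite /w0; ring.
apply: JM => //; apply: ideal_B => //; apply: HuJ.
by apply: SD => //; apply: SM => //; apply: SX.
Qed.

Lemma stab d : (exists c, S c /\ v ^+ d = u * c) ->
  exists n, forall a, Qs S Q u n a -> addU S (Qs S Q u n.+1) u a.
Proof.
move=> [c [Sc Hd]]; apply: NNPP => H.
have H' : forall n, exists a, Qs S Q u n a /\ ~ addU S (Qs S Q u n.+1) u a.
  move=> n; apply: NNPP => H1; apply: H; exists n => a Qa.
  by apply: NNPP => H2; apply: H1; exists a.
have C : forall n e, (e < n)%N -> ~ addU S (Qs S Q u n) u (v ^+ e).
  elim=> [|n IH] e //.
  rewrite ltnS leq_eqVlt => /orP [/eqP ->| He] HJ.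
    have [a [Qa nJ]] := H' n.
    have I1 := addU_ideal (Qs_ideal n).
    have [t [s [St Ss Ha]]] := lemL I1 (fun s Ss => addU_r (Qs_ideal n) Ss) IH (addU_l (Qs_ideal n) Qa).
    apply: nJ; rewrite Ha.
    have I2 := addU_ideal (Qs_ideal n.+1).
    have [_ _ ID _] := I2.
    by apply: ID; [apply: ideal_M | apply: addU_r; first exact: Qs_ideal].
  apply: (IH e He).
  case: HJ => b [s [Qb Ss ->]]; exists b, s; split => //.
  exact: Qs_sub.
apply: (C d.+1 d (ltnSn d)); rewrite Hd; apply: addU_r => //; exact: Qs_ideal.
Qed.

Lemma gens_in (I : K -> Prop) (s0 : seq K) :
  (forall a, I a <-> exists c : 'I_(size s0) -> K, (forall j, S (c j)) /\
      a = \sum_(j < size s0) c j * s0`_j) ->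
  forall i, (i < size s0)%N -> I s0`_i.
Proof.
move=> H i Hi; apply/H.
exists (fun j : 'I_(size s0) => if (j == i :> nat) then 1 else 0); split.
  by move=> j; case: ifP.
rewrite (bigD1 (Ordinal Hi)) //= eqxx mul1r big1 ?addr0 // => j.
by rewrite -val_eqE /= => /negbTE ->; rewrite mul0r.
Qed.

Lemma step3 n : (forall a, Qs S Q u n a -> addU S (Qs S Q u n.+1) u a) ->
  forall a, Qs S Q u n a -> Qs S Q u n.+1 a.
Proof.
move=> Hst.
have [s0 Hs0] := Hnoeth (Qs_ideal n).
set r := size s0 in Hs0 *.
have gen := gens_in Hs0.
have Hex : forall i, exists p : K * ('I_r -> K),
    ((i < r)%N -> Qs S Q u n.+1 p.1 /\ s0`_i = p.1 + u * \sum_(j < r) p.2 j * s0`_j)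
    /\ forall j, S (p.2 j).
  move=> i; case: (ltnP i r) => Hi; last first.
    by exists (0, fun _ => 0); split => // /(leq_trans Hi); rewrite ltnn.
  have [b [c [Qb Sc Hb]]] := Hst _ (gen i Hi).
  have : Qs S Q u n c.
    apply: Qs_sat => //; have -> : u * c = s0`_i - b by rewrite Hb; ring.
    by apply: ideal_B; [apply: Qs_ideal | apply: gen | apply: Qs_sub].
  move/Hs0 => [cc [Scc Hcc]].
  by exists (b, cc); split => // _; split => //; rewrite Hb Hcc.
have [f Hf] := fchoice Hex.
have [QsS Qs0 QsD QsM] := Qs_ideal n.+1.
have Hel := @elim_lemma K S (unitS S) (mm S u v) (Qs S Q u n.+1)
  (@mm_S) (fun a Ua => proj1 Ua) (@unitBm) (@unitM) (@mmM) (@mmD)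
  (fun a b Ja Sb => QsM b a Sb Ja) QsD Qs0
  r 1 (fun i => s0`_i) (fun i => (f i).1) (fun i l => u * conv (f i).2 l).
have h1 : unitS S 1.
  by split; [exact: S1 | split; [exact: oner_neq0 | rewrite invr1; exact: S1]].
have h2 : forall i l, mm S u v (u * conv (f i).2 l).
  move=> i l; exists (conv (f i).2 l), 0; split => //; last by ring.
  rewrite /conv; case: insubP => [o _ _|_] //; exact: (proj2 (Hf i)).
have h3 : forall i, (i < r)%N -> Qs S Q u n.+1 (f i).1.
  by move=> i Hi; case: ((proj1 (Hf i)) Hi).
have h4 : forall i, (i < r)%N -> 1 * s0`_i = (f i).1 + \sum_(l < r) u * conv (f i).2 l * s0`_l.
  move=> i Hi; rewrite mul1r; have [_ ->] := (proj1 (Hf i)) Hi.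
  congr (_ + _); rewrite big_distrr /=; apply: eq_bigr => j _.
  by rewrite convE mulrA.
have [g [Ug Hg]] := Hel h1 h2 h3 h4.
move=> a /Hs0 [c [Sc ->]]; apply: ideal_big; first exact: Qs_ideal.
move=> j; rewrite mulrC; apply: ideal_M; [exact: Qs_ideal| |exact: Sc].
have [Ug1 [g0 Sg']] := Ug.
rewrite -[_`_j](mulKf g0); rewrite mulrC; apply: ideal_M; [exact: Qs_ideal| |exact: Sg'].
exact: Hg.
Qed.

Lemma step4 n : (forall a, Qs S Q u n a -> Qs S Q u n.+1 a) ->
  forall a, Qs S Q u n a -> a = 0.
Proof.
move=> Hn.
have [s0 Hs0] := Hnoeth (Qs_ideal n).
set r := size s0 in Hs0 *.
have gen := gens_in Hs0.
have [QS Q0 QD QM] := QI.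
set QC := fun a => exists C : 'I_r -> K, (forall j, Q (C j)) /\ a = \sum_(j < r) C j * s0`_j.
have QCl : forall l : seq (K * K), (forall pr, pr \in l -> Q pr.1 /\ Pw S Q n pr.2) ->
    QC (\sum_(pr <- l) pr.1 * pr.2).
  elim=> [|pr l IH] Hl.
    by exists (fun _ => 0); split => //; rewrite big_nil big1 // => j _; rewrite mul0r.
  have [Q1 P2] := Hl pr (mem_head _ _).
  have [C [QCj HC]] := IH (fun pr' H' => Hl pr' (mem_behead (s := pr :: l) H')).
  have [D [SDj HD]] := (Hs0 pr.2).1 (Pw_Qs P2).
  exists (fun j => pr.1 * D j + C j); split.
    by move=> j; apply: QD; [apply: ideal_M | exact: QCj].
  rewrite big_cons HC HD big_distrr /= -big_split /=; apply: eq_bigr => j _; ring.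
have Hex : forall i, exists p : nat * ('I_r -> K),
    ((i < r)%N -> u ^+ p.1 * s0`_i = \sum_(j < r) p.2 j * s0`_j) /\ forall j, Q (p.2 j).
  move=> i; case: (ltnP i r) => Hi; last first.
    by exists (0%N, fun _ => 0); split => // /(leq_trans Hi); rewrite ltnn.
  have [_ [j [l [Hl Hsum]]]] := Hn _ (gen i Hi).
  have [C [QCj HC]] := QCl l Hl.
  by exists (j, C); split => // _; rewrite Hsum HC.
have [f Hf] := fchoice Hex.
set JJ := (\sum_(i < r) (f i).1)%N.
have Hle : forall i, (i < r)%N -> ((f i).1 <= JJ)%N.
  by move=> i Hi; rewrite /JJ (bigD1 (Ordinal Hi)) //= leq_addr.
have [_ nQ1 Qp] := HQ.
have nQX : forall m, ~ Q (u ^+ m).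
  elim=> [|m IH]; first by rewrite expr0.
  by rewrite exprS => /Qp [] //; apply: SX.
have Hel := @elim_lemma K S (fun g => S g /\ ~ Q g) Q (fun a => a = 0)
  QS (fun a Ua => proj1 Ua)
  (fun g c '(conj Sg nQg) Qc => conj (SB Sg (QS _ Qc))
      (fun Qgc => nQg (eq_ind _ Q (QD _ _ Qgc Qc) _ (subrK c g))))
  (fun g h '(conj Sg nQg) '(conj Sh nQh) => conj (SM Sg Sh)
      (fun Qgh => match Qp g h Sg Sh Qgh with or_introl H => nQg H | or_intror H => nQh H end))
  (fun a b Qa Sb => QM b a Sb Qa) QD
  (fun a b Ja Sb => eq_ind_r (fun z => b * z = 0) (mulr0 b) Ja)
  (fun a b Ja Jb => eq_ind_r (fun z => z + b = 0) (eq_ind_r (fun z => 0 + z = 0) (addr0 0) Jb) Ja)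
  (erefl 0)
  r (u ^+ JJ) (fun i => s0`_i) (fun _ => 0) (fun i l => u ^+ (JJ - (f i).1) * conv (f i).2 l).
have h1 : S (u ^+ JJ) /\ ~ Q (u ^+ JJ) by split; [apply: SX | apply: nQX].
have h2 : forall i l, Q (u ^+ (JJ - (f i).1) * conv (f i).2 l).
  move=> i l; rewrite mulrC; apply: ideal_M => //; last by apply: SX.
  rewrite /conv; case: insubP => [o _ _|_] //; exact: (proj2 (Hf i)).
have h3 : forall i, (i < r)%N -> (0 : K) = 0 by [].
have h4 : forall i, (i < r)%N -> u ^+ JJ * s0`_i = 0 + \sum_(l < r) u ^+ (JJ - (f i).1) * conv (f i).2 l * s0`_l.
  move=> i Hi; rewrite add0r -(subnK (Hle i Hi)) exprD -mulrA ((proj1 (Hf i)) Hi).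
  rewrite big_distrr /=; apply: eq_bigr => j _.
  by rewrite convE subnK ?Hle //; ring.
have [g [[Sg nQg] Hg]] := Hel h1 h2 h3 h4.
have g0 : g != 0 by apply/eqP => g0; apply: nQg; rewrite g0.
move=> a /Hs0 [c [Sc ->]]; apply: big1 => j _.
by have := Hg j (ltn_ord j) => /eqP; rewrite mulf_eq0 (negbTE g0) /= => /eqP ->; rewrite mulr0.
Qed.

Lemma powers_false d : (exists a, Q a /\ a != 0) -> (exists c, S c /\ v ^+ d = u * c) -> False.
Proof.
move=> [a [Qa a0]] Hd.
have [n Hn] := stab Hd.
have H3 := step3 Hn.
have H4 := step4 H3.
have := H4 _ (Pw_Qs (Pw_pow n Qa)) => /eqP; rewrite expf_eq0 (negbTE a0) andbF //.
Qed.

End Powers.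

Lemma prime_pow (P : K -> Prop) a d : is_prime_ideal S P -> S a -> P (a ^+ d) -> P a.
Proof.
move=> [PI nP1 Pp] Sa; elim: d => [|d IH]; first by rewrite expr0.
by rewrite exprS => /Pp [] //; apply: SX.
Qed.

Lemma core d : (exists c, S c /\ v ^+ d = u * c) ->
  ~ (exists P0 P1 P2, [/\ is_prime_ideal S P0, is_prime_ideal S P1,
       is_prime_ideal S P2, strict_incl P0 P1 & strict_incl P1 P2]).
Proof.
move=> Hd [P0 [P1 [P2 [H0 H1 H2 [i01 [a [P1a nP0a]]] [i12 [b [P2b nP1b]]]]]]].
apply: (@powers_false P1 H1 _ d _ Hd).
  move=> P1u; apply: nP1b.
  have [P2I nP21 _] := H2.
  have [P2S _ _ _] := P2I.
  have Sb := P2S b P2b.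
  have Ub : ~ unitS S b by move=> Ub; apply: nP21; apply: (ideal_unit P2I P2b Ub).
  have [s [t [Ss St ->]]] := (Hloc Sb).1 Ub.
  have [[P1S P10 P1D P1M] _ _] := H1.
  have [c [Sc Hc]] := Hd.
  have P1v : P1 v by apply: (@prime_pow P1 v d H1 Sv); rewrite Hc; apply: ideal_M => //; case: H1.
  by apply: P1D; rewrite mulrC; apply: P1M.
exists a; split => //; apply/eqP => a0; apply: nP0a; rewrite a0.
by case: H0 => [[]].
Qed.
End Core.

Section Val.
Variables (k K : fieldType) (iota : {rmorphism k -> K}) (nu : K -> rat).
Hypothesis Hval : is_k_valuation iota nu.

Lemma nuM a b : a != 0 -> b != 0 -> nu (a * b) = nu a + nu b.
Proof. by case: Hval => H _ _; apply: H. Qed.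

Lemma nu1 : nu 1 = 0.
Proof. have := nuM (oner_neq0 K) (oner_neq0 K); rewrite mul1r => H; have : nu 1 + nu 1 - nu 1 = 0 by rewrite -H subrr. by rewrite addrK. Qed.

Lemma nuV a : a != 0 -> nu a^-1 = - nu a.
Proof.
move=> a0; have := nuM a0 (invr_neq0 a0); rewrite mulfV // nu1 => H; lra.
Qed.

Lemma nuX a m : a != 0 -> nu (a ^+ m) = m%:R * nu a.
Proof.
move=> a0; elim: m => [|m IH]; first by rewrite expr0 nu1 mul0r.
by rewrite exprS nuM ?expf_neq0 // IH mulrSr mulrDl mul1r addrC.
Qed.

Lemma nuC c : c != 0 -> nu (iota c) = 0.
Proof. by case: Hval => _ _; apply. Qed.

Lemma nuN a : a != 0 -> nu (- a) = nu a.
Proof.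
move=> a0; rewrite -mulN1r nuM ?oppr_eq0 ?oner_neq0 //.
have -> : (-1 : K) = iota (-1) by rewrite rmorphN rmorph1.
by rewrite nuC ?add0r // oppr_eq0 oner_neq0.
Qed.

Lemma nu_min a b : a != 0 -> b != 0 -> a + b != 0 -> Num.min (nu a) (nu b) <= nu (a + b).
Proof. by case: Hval => _ H _; apply: H. Qed.

Lemma nu_gt a b r : a != 0 -> b != 0 -> a + b != 0 -> r < nu a -> r < nu b -> r < nu (a + b).
Proof.
move=> a0 b0 ab0 ra rb; apply: (lt_le_trans _ (nu_min a0 b0 ab0)).
by rewrite lt_min ra rb.
Qed.

Lemma nu_prod (T : nat -> K) (l : nat) (nn : nat -> nat) :
  (forall j, (j < l)%N -> T j != 0) ->
  mprod T l nn != 0 /\ nu (mprod T l nn) = \sum_(j < l) (nn j)%:R * nu (T j).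
Proof.
rewrite /mprod; elim: l => [|l IH] H.
  by rewrite !big_ord0 nu1 oner_neq0.
have [h1 h2] := IH (fun j Hj => H j (ltn_trans Hj (ltnSn l))).
have Tl : T l ^+ nn l != 0 by rewrite expf_neq0 // H.
rewrite !big_ord_recr /= mulf_neq0 //; split => //.
by rewrite nuM // h2 nuX // H.
Qed.

Lemma residue_unique a l1 l2 : is_residue iota nu a l1 -> is_residue iota nu a l2 -> l1 = l2.
Proof.
rewrite /is_residue /valmax => H1 H2; apply/eqP; rewrite -subr_eq0; apply/negPn/negP => d0.
set A := a - iota l1 in H1; set B := a - iota l2 in H2.
have Hd : iota (l1 - l2) = B + - A by rewrite rmorphB /A /B; ring.
have nz : iota (l1 - l2) != 0 by rewrite fmorph_eq0.
have n0 := nuC d0.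
have vm : forall X, X != 0 -> X = 0 \/ 0 < nu X -> 0 < nu X.
  by move=> X /eqP X0 [].
case: (eqVneq A 0) => [A0|A0].
  move: Hd nz n0; rewrite A0 oppr0 addr0 => -> nz n0.
  by move: (vm B nz H2); rewrite n0 ltxx.
have PA := vm A A0 H1.
case: (eqVneq B 0) => [B0|B0].
  by move: Hd n0; rewrite B0 add0r => -> ; rewrite nuN // => e; move: PA; rewrite e ltxx.
have PB := vm B B0 H2.
have nA : - A != 0 by rewrite oppr_eq0.
have H := @nu_gt B (- A) 0 B0 nA; rewrite -Hd in H.
by have := H nz PB; rewrite nuN // n0 ltxx => /(_ PA).
Qed.
End Val.

Section Num.
Variables (w : nat -> rat) (p q : nat -> nat) (i : nat).
Hypothesis Hw0 : w 0 = 1.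
Hypothesis Hpq : forall l, (0 < l <= i)%N -> [/\ (0 < p l)%N, (0 < q l)%N & coprime (p l) (q l)].
Hypothesis Hw1 : w 1 = (p 1)%:R / (q 1)%:R.
Hypothesis HwS : forall l, (0 < l < i)%N ->
  w l.+1 = (q l)%:R * w l + ((qprod q l)%:R)^-1 * ((p l.+1)%:R / (q l.+1)%:R).
Hypothesis Hi : (0 < i)%N.

Local Notation E := (qprod q).

Lemma E0 : E 0 = 1%N.
Proof. by rewrite /qprod big_geq. Qed.

Lemma ES l : E l.+1 = (E l * q l.+1)%N.
Proof. by rewrite /qprod big_nat_recr. Qed.

Lemma E_gt0 l : (l <= i)%N -> (0 < E l)%N.
Proof.
elim: l => [|l IH] Hl; first by rewrite E0.
rewrite ES muln_gt0 IH ?(ltnW Hl) //=.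
by have [] := @Hpq l.+1 Hl.
Qed.

Lemma E_neq0 l : (l <= i)%N -> (E l)%:R != 0 :> rat.
Proof. by move=> Hl; rewrite pnatr_eq0 -lt0n E_gt0. Qed.

Lemma E_dvd l l' : (l <= l')%N -> (E l %| E l')%N.
Proof.
move=> /subnK <-; elim: (l' - l)%N => [|m IH]; first by rewrite add0n.
by rewrite addSn ES dvdn_mulr.
Qed.

Definition inG l (r : rat) := exists z : int, r = z%:~R / (E l)%:R.

Lemma inG_int l (z : int) : (l <= i)%N -> inG l z%:~R.
Proof. move=> Hl; exists (z * (E l)%:R); rewrite rmorphM /= rmorph_nat mulfK // E_neq0 //. Qed.

Lemma inG_add l r1 r2 : inG l r1 -> inG l r2 -> inG l (r1 + r2).
Proof. by move=> [z1 ->] [z2 ->]; exists (z1 + z2); rewrite rmorphD mulrDl. Qed.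

Lemma inG_mul l (z : int) r : inG l r -> inG l (z%:~R * r).
Proof. by move=> [z1 ->]; exists (z * z1); rewrite rmorphM mulrA. Qed.

Lemma inG_mono l l' r : (l <= l')%N -> (l' <= i)%N -> inG l r -> inG l' r.
Proof.
move=> Hll Hl' [z ->]; have /dvdnP [m Hm] := E_dvd Hll.
have := E_gt0 Hl'; rewrite Hm muln_gt0 => /andP [m0 e0].
have m0' : (m%:R : rat) != 0 by rewrite pnatr_eq0 -lt0n.
have e0' : ((E l)%:R : rat) != 0 by rewrite pnatr_eq0 -lt0n.
exists (z * m%:R); rewrite Hm natrM rmorphM /= rmorph_nat.
by field; rewrite m0' e0'.
Qed.

Lemma inG_sum l n (d : nat -> int) : (forall j, (j < n)%N -> inG l (w j)) ->
  inG l (\sum_(j < n) (d j)%:~R * w j).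
Proof.
move=> H; elim: n H => [|n IH] H; first by rewrite big_ord0; exists 0; rewrite mul0r.
rewrite big_ord_recr /=; apply: inG_add.
  by apply: IH => j Hj; apply: H; apply: ltn_trans Hj _.
by apply: inG_mul; apply: H.
Qed.


Lemma q_pos l : (0 < l <= i)%N -> (q l)%:R != 0 :> rat.
Proof. by move=> H; have [_ H2 _] := Hpq H; rewrite pnatr_eq0 -lt0n. Qed.

Lemma F l : (0 < l <= i)%N -> exists A : int, w l = A%:~R / (E l.-1)%:R + (p l)%:R / (E l)%:R.
Proof.
elim: l => [|l IH] // /andP [_ Hl].
case: (posnP l) => [->|l0].
  by exists 0; rewrite mul0r add0r Hw1 ES E0 mul1n.
have [A HA] := IH ltac:(by rewrite l0 ltnW).
exists ((q l)%:R * (A * (q l)%:R + (p l)%:R)).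
rewrite HwS ?l0 // HA.
have El : E l = (E l.-1 * q l)%N by rewrite -{1}(prednK l0) ES prednK.
have e1' : (E l.-1)%:R != 0 :> rat by apply: E_neq0; rewrite (leq_trans (leq_pred l)) // ltnW.
have q1 := q_pos (l := l) ltac:(by rewrite l0 ltnW).
have q2 := q_pos (l := l.+1) ltac:(by rewrite Hl).
rewrite ES El !natrM rmorphM rmorphD rmorphM /= !rmorph_nat.
by field; rewrite e1' q1 q2.
Qed.

Lemma G l : (l <= i)%N -> inG l (w l).
Proof.
move=> Hl; case: (posnP l) => [->|l0].
  by rewrite Hw0; have := inG_int 1 (leq0n i); rewrite rmorph1.
have [A ->] := @F l ltac:(by rewrite l0 Hl).
apply: inG_add; last by exists (p l)%:R; rewrite rmorph_nat.
by apply: (@inG_mono l.-1) => //; [apply: leq_pred | exists A].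
Qed.

Lemma pos l : (0 < l <= i)%N ->
  0 < w l /\ \sum_(1 <= j < l) ((q j)%:R - 1) * w j < w l.
Proof.
elim: l => [|l IH] // /andP [_ Hl].
case: (posnP l) => [->|l0].
  rewrite big_geq // Hw1; have [p0 q0 _] := @Hpq 1%N ltac:(by rewrite Hi).
  by split => //; apply: divr_gt0; rewrite ltr0n.
have [w0 Hs] := IH ltac:(by rewrite l0 ltnW).
rewrite big_nat_recr //= HwS ?l0 //.
have [p0 q0 _] := @Hpq l.+1 ltac:(by rewrite Hl).
have [_ q0' _] := @Hpq l ltac:(by rewrite l0 ltnW).
have X0 : 0 < ((E l)%:R)^-1 * ((p l.+1)%:R / (q l.+1)%:R) :> rat.
  apply: mulr_gt0; first by rewrite invr_gt0 ltr0n E_gt0 // ltnW.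
  by apply: divr_gt0; rewrite ltr0n.
have Q1 : 1 <= (q l)%:R :> rat by rewrite ler1n.
have QW : 0 <= ((q l)%:R - 1) * w l by apply: mulr_ge0; lra.
move: QW; rewrite mulrBl mul1r => QW.
split; lra.
Qed.

Lemma sum_split0 l (F : nat -> rat) : (0 < l)%N ->
  \sum_(j < l) F j = F 0%N + \sum_(1 <= j < l) F j.
Proof. by move=> l0; rewrite -(big_mkord xpredT F) big_ltn. Qed.

Lemma nn0_pos l (nn : nat -> nat) : (0 < l <= i)%N ->
  (forall j, (0 < j < l)%N -> (nn j < q j)%N) ->
  (q l)%:R * w l = \sum_(j < l) (nn j)%:R * w j -> (0 < nn 0)%N.
Proof.
move=> /andP [l0 li] Hnn Heq.
have [wl Hs] := @pos l ltac:(by rewrite l0 li).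
have Hle : \sum_(1 <= j < l) (nn j)%:R * w j <= \sum_(1 <= j < l) ((q j)%:R - 1) * w j.
  rewrite big_nat_cond [X in _ <= X]big_nat_cond; apply: ler_sum => j /andP [/andP [j1 jl] _].
  have [wj _] := @pos j ltac:(by rewrite j1 (leq_trans (ltnW jl) li)).
  apply: ler_wpM2r; first exact: ltW.
  have Hn := Hnn j ltac:(by rewrite j1 jl).
  have : (nn j)%:R + 1 <= (q j)%:R :> rat by rewrite natr1 ler_nat.
  lra.
move: Heq; rewrite (@sum_split0 l (fun j => (nn j)%:R * w j)) // Hw0 mulr1 => Heq.
have [_ q0 _] := @Hpq l ltac:(by rewrite l0 li).
have Q1 : 1 <= (q l)%:R :> rat by rewrite ler1n.
have QW : 0 <= ((q l)%:R - 1) * w l by apply: mulr_ge0; lra.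
move: QW; rewrite mulrBl mul1r => QW.
have : 0 < (nn 0%N)%:R :> rat by lra.
by rewrite ltr0n.
Qed.

Lemma cop_z l : (0 < l <= i)%N -> exists a b : int, a * (p l)%:Z + b * (q l)%:Z = 1.
Proof.
move=> H; have [_ _ c] := Hpq H.
have : coprimez (p l) (q l) by rewrite coprimezE.
by move/coprimezP => [[a b] /= Hab]; exists a, b.
Qed.

Lemma repr l : (0 < l <= i)%N -> forall z : int, exists nn : nat -> int,
  (forall j, (0 < j < l)%N -> 0 <= nn j < (q j)%:Z) /\
  z%:~R / (E l.-1)%:R = \sum_(j < l) (nn j)%:~R * w j.
Proof.
elim: l => [|l IH] // /andP [_ Hl] z.
case: (posnP l) => [l0|l0].
  subst l; exists (fun _ => z); split; first by move=> j; case: j => [|[|j]].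
  by rewrite big_ord1 Hw0 /= mulr1 E0 invr1 mulr1.
have Hl' : (0 < l <= i)%N by rewrite l0 ltnW.
have [A HA] := F Hl'.
have [a [b Hab]] := cop_z Hl'.
have q0 := q_pos Hl'.
have q0z : (q l)%:Z != 0 by move: q0; rewrite pnatr_eq0.
set t := ((z * a) %% (q l)%:Z)%Z.
set kq := ((z * a) %/ (q l)%:Z)%Z.
set M := z * b + kq * (p l)%:Z.
have Hz : z = M * (q l)%:Z + t * (p l)%:Z.
  have Hd := divz_eq (z * a) (q l)%:Z; rewrite -/t -/kq in Hd.
  have -> : t = z * a - kq * (q l)%:Z by rewrite Hd; ring.
  by rewrite /M; rewrite -[z in LHS]mulr1 -Hab; ring.
have Ht : 0 <= t < (q l)%:Z.
  by rewrite modz_ge0 //= -[X in _ < X]gez0_abs ?ltz_mod //.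
clearbody t kq M.
have [nn [Hnn Hsum]] := IH Hl' (M - t * A).
exists (fun j => if j == l then t else nn j); split.
  move=> j /andP [j0 jl]; case: eqP => [->|/eqP jnl] //.
  by apply: Hnn; rewrite j0 /= ltn_neqAle jnl -ltnS.
rewrite big_ord_recr /= eqxx.
rewrite (eq_bigr (fun j : 'I_l => (nn j)%:~R * w j)); last first.
  by move=> j _; rewrite ltn_eqF.
rewrite -Hsum HA.
have El : E l = (E l.-1 * q l)%N by rewrite -{1}(prednK l0) ES prednK.
have e1 : (E l.-1)%:R != 0 :> rat by apply: E_neq0; rewrite (leq_trans (leq_pred l)) // ltnW.
rewrite El natrM.
have Hz' : (z%:~R : rat) = M%:~R * (q l)%:R + t%:~R * (p l)%:R.
  by rewrite {1}Hz rmorphD !rmorphM /= -!pmulrn.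
rewrite Hz' rmorphB rmorphM /=.
by field; rewrite e1 q0.
Qed.

Lemma uniq_rep l : (0 < l <= i)%N -> forall d : nat -> int,
  (forall j, (0 < j < l)%N -> (`|d j| < q j)%N) ->
  \sum_(j < l) (d j)%:~R * w j = 0 -> forall j, (j < l)%N -> d j = 0.
Proof.
elim: l => [|l IH] // /andP [_ Hl] d Hd Hs.
case: (posnP l) => [l0|l0].
  subst l; move: Hs; rewrite big_ord1 Hw0 mulr1 => /eqP; rewrite intr_eq0 => /eqP H.
  by move=> j; rewrite ltnS leqn0 => /eqP ->.
have Hl' : (0 < l <= i)%N by rewrite l0 ltnW.
have [A HA] := F Hl'.
have q0 := q_pos Hl'.
have El : E l = (E l.-1 * q l)%N by rewrite -{1}(prednK l0) ES prednK.
have e1 : (E l.-1)%:R != 0 :> rat by apply: E_neq0; rewrite (leq_trans (leq_pred l)) // ltnW.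
have [Z HZ] : inG l.-1 (\sum_(j < l) (d j)%:~R * w j).
  apply: inG_sum => j Hj; apply: (@inG_mono j); last apply: G.
  - by rewrite -ltnS prednK.
  - by rewrite (leq_trans (leq_pred l)) // ltnW.
  - by rewrite (leq_trans (ltnW Hj)) // ltnW.
move: Hs; rewrite big_ord_recr /= HZ HA El natrM => Hs.
have Hint : (d l * (p l)%:Z : int) = - (Z + d l * A) * (q l)%:Z.
  apply/eqP; rewrite -(eqr_int rat) /=; apply/eqP.
  rewrite !rmorphM /= rmorphN rmorphD rmorphM /= -!pmulrn.
  apply/eqP; rewrite -subr_eq0; apply/eqP.
  have -> : (d l)%:~R * (p l)%:R - - (Z%:~R + (d l)%:~R * A%:~R) * (q l)%:R =
     (Z%:~R / (E l.-1)%:R + (d l)%:~R * (A%:~R / (E l.-1)%:R + (p l)%:R / ((E l.-1)%:R * (q l)%:R))) * ((E l.-1)%:R * (q l)%:R) :> rat.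
    by field; rewrite e1 q0.
  by rewrite Hs mul0r.
have [_ _ cop] := Hpq Hl'.
have dl0 : d l = 0.
  have Hdv : ((q l)%:Z %| d l * (p l)%:Z)%Z by rewrite Hint dvdz_mull // dvdzz.
  have cz : coprimez (q l) (p l) by rewrite coprimezE coprime_sym.
  move: Hdv; rewrite Gauss_dvdzl // dvdzE /= => Hdv.
  have Hlt := Hd l ltac:(by rewrite l0 ltnSn).
  case: (posnP `|d l|%N) => [/eqP|Hpos]; first by rewrite absz_eq0 => /eqP.
  by have := dvdn_leq Hpos Hdv; rewrite leqNgt Hlt.
have Hs' : \sum_(j < l) (d j)%:~R * w j = 0.
  by move: Hs; rewrite dl0 mul0r addr0 -HZ.
move=> j; rewrite ltnS leq_eqVlt => /orP [/eqP ->|Hj] //.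
apply: (IH Hl' d _ Hs' j Hj) => j' /andP [j0 jl]; apply: Hd.
by rewrite j0 (ltn_trans jl).
Qed.

Lemma nn0_pos_int l (nn : nat -> int) : (0 < l <= i)%N ->
  (forall j, (0 < j < l)%N -> 0 <= nn j < (q j)%:Z) ->
  (q l)%:R * w l = \sum_(j < l) (nn j)%:~R * w j -> 0 < nn 0%N.
Proof.
move=> /andP [l0 li] Hnn Heq.
have [wl Hs] := @pos l ltac:(by rewrite l0 li).
have Hle : \sum_(1 <= j < l) (nn j)%:~R * w j <= \sum_(1 <= j < l) ((q j)%:R - 1) * w j.
  rewrite big_nat_cond [X in _ <= X]big_nat_cond; apply: ler_sum => j /andP [/andP [j1 jl] _].
  have [wj _] := @pos j ltac:(by rewrite j1 (leq_trans (ltnW jl) li)).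
  apply: ler_wpM2r; first exact: ltW.
  have /andP [_ Hn] := Hnn j ltac:(by rewrite j1 jl).
  have : (nn j + 1) <= (q j)%:Z by rewrite lezD1.
  rewrite -(ler_int rat) rmorphD /= -pmulrn => H; lra.
move: Heq; rewrite (@sum_split0 l (fun j => (nn j)%:~R * w j)) // Hw0 mulr1 => Heq.
have [_ q0 _] := @Hpq l ltac:(by rewrite l0 li).
have Q1 : 1 <= (q l)%:R :> rat by rewrite ler1n.
have QW : 0 <= ((q l)%:R - 1) * w l by apply: mulr_ge0; lra.
move: QW; rewrite mulrBl mul1r => QW.
have : 0 < (nn 0%N)%:~R :> rat by lra.
by rewrite ltr0z.
Qed.

End Num.

Lemma posrat (r : rat) : 0 < r -> exists p q : nat,
  [/\ (0 < p)%N, (0 < q)%N, coprime p q & r = p%:R / q%:R].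
Proof.
move=> r0; exists `|numq r|%N, `|denq r|%N.
have n0 : 0 < numq r by rewrite numq_gt0.
have d0 := denq_gt0 r.
split.
- by rewrite absz_gt0 gt_eqF.
- by rewrite absz_gt0 gt_eqF.
- exact: coprime_num_den.
- rewrite -{1}(divq_num_den r); congr (_ / _).
    by rewrite pmulrn gez0_abs // ltW.
  by rewrite pmulrn gez0_abs // ltW.
Qed.

Section Cong.
Variables (k K : fieldType) (iota : {rmorphism k -> K}) (S : K -> Prop) (x y : K).
Hypothesis HS : subring iota S.
Hypotheses (Sx : S x) (Sy : S y).

Lemma SXc a n : S a -> S (a ^+ n).
Proof. by move=> Sa; elim: n => [|n IH]; rewrite ?expr0 ?exprS; [exact: (S1 HS) | apply: (SM HS)]. Qed.

Definition xdiv a := exists c, S c /\ a = x * c.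

Lemma Sprod r (F : 'I_r -> K) : (forall j, S (F j)) -> S (\prod_(j < r) F j).
Proof. move=> H; apply: (big_rec S); first exact: (S1 HS). by move=> j z _ Sz; apply: (SM HS). Qed.

Lemma xdiv_pow a b m : S a -> S b -> xdiv (a - b) -> xdiv (a ^+ m - b ^+ m).
Proof.
move=> Sa Sb [c [Sc Hc]]; elim: m => [|m [c' [Sc' Hc']]].
  by exists 0; split; [exact: (S0 HS) | rewrite !expr0 subrr mulr0].
exists (a * c' + c * b ^+ m); split.
  by apply: (SD HS); apply: (SM HS) => //; apply: SXc.
have -> : a ^+ m.+1 - b ^+ m.+1 = a * (a ^+ m - b ^+ m) + (a - b) * b ^+ m by rewrite !exprS; ring.
by rewrite Hc' Hc; ring.
Qed.

Lemma mprod_x (T : nat -> K) l nn : (0 < l)%N -> (0 < nn 0%N)%N -> T 0%N = x ->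
  (forall j, (j < l)%N -> S (T j)) -> xdiv (mprod T l nn).
Proof.
case: l => // l _ n0 T0 HT; rewrite /mprod big_ord_recl /= T0.
exists (x ^+ (nn 0%N).-1 * \prod_(i < l) T (bump 0 i) ^+ nn (bump 0 i)); split.
  apply: (SM HS); first by apply: SXc.
  by apply: Sprod => j; apply: SXc; apply: HT; rewrite /bump leq0n add1n ltnS ltn_ord.
by rewrite mulrA -exprS prednK.
Qed.


Lemma SB' a b : S a -> S b -> S (a - b).
Proof. by move=> Sa Sb; apply: (SD HS) => //; apply: (SN HS). Qed.

Lemma S_mprod (T : nat -> K) l nn : (forall j, (j < l)%N -> S (T j)) -> S (mprod T l nn).
Proof. by move=> HT; apply: Sprod => j; apply: SXc; apply: HT. Qed.

Lemma step_cong (T : nat -> K) l nn m c e : T 0%N = x -> (0 < l)%N -> (0 < nn 0%N)%N ->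
  (forall j, (j <= l)%N -> S (T j)) -> xdiv (T l - y ^+ e) ->
  S (T l ^+ m - iota c * mprod T l nn) /\
  xdiv (T l ^+ m - iota c * mprod T l nn - y ^+ (e * m)).
Proof.
move=> T0 l0 n0 HT [c1 [Sc1 Hc1]].
have HT' : forall j, (j < l)%N -> S (T j) by move=> j Hj; apply: HT; apply: ltnW.
split.
  apply: SB'; first by apply: SXc; apply: HT.
  by apply: (SM HS); [apply: (SC HS) | apply: S_mprod].
have [c' [Sc' Hc']] := xdiv_pow m (HT l (leqnn l)) (SXc e Sy) (ex_intro _ c1 (conj Sc1 Hc1)).
have [c2 [Sc2 Hc2]] := mprod_x l0 n0 T0 HT'.
exists (c' - iota c * c2); split.
  by apply: SB' => //; apply: (SM HS) => //; apply: (SC HS).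
rewrite Hc2 exprM.
have -> : T l ^+ m - iota c * (x * c2) - (y ^+ e) ^+ m = (T l ^+ m - (y ^+ e) ^+ m) - iota c * (x * c2) by ring.
by rewrite Hc'; ring.
Qed.

Lemma T_cong (T : nat -> K) (q : nat -> nat) (n : nat -> nat -> nat) (lam : nat -> k) i :
  T 0%N = x -> T 1%N = y ->
  (forall l, (0 < l < i)%N -> T l.+1 = T l ^+ q l - iota (lam l) * mprod T l (n l) /\ (0 < n l 0%N)%N) ->
  forall l, (l <= i)%N -> (forall j, (j <= l)%N -> S (T j)) /\ ((0 < l)%N -> exists e, xdiv (T l - y ^+ e)).
Proof.
move=> T0 T1 H; elim=> [|l IH] Hl.
  by split => // j; rewrite leqn0 => /eqP ->; rewrite T0.
have [IHS IHc] := IH (ltnW Hl).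
case: (posnP l) => [l0|l0].
  subst l; split.
    by move=> j; rewrite leq_eqVlt ltnS leqn0 => /orP [/eqP ->|/eqP ->]; rewrite ?T0 ?T1.
  move=> _; exists 1%N; exists 0; split; first exact: (S0 HS).
  by rewrite T1 expr1 subrr mulr0.
have [HT n0] := H l ltac:(by rewrite l0 Hl).
have [e He] := IHc l0.
have [STl Hc] := @step_cong T l (n l) (q l) (lam l) e T0 l0 n0 IHS He.
split; last by move=> _; exists (e * q l)%N; rewrite HT.
move=> j; rewrite leq_eqVlt => /orP [/eqP ->|]; first by rewrite HT.
by rewrite ltnS; apply: IHS.
Qed.

End Cong.

Unset Implicit Arguments.
Theorem corollary5p10 (k : closedFieldType) (K : fieldType)
    (iota : {rmorphism k -> K}) (nu : K -> rat) (S : K -> Prop) (x y : K) :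
  [pchar k] =i pred0 ->
  function_field_trdeg2 iota ->
  is_k_valuation iota nu ->
  residue_field_is_k iota nu ->
  algebraic_local_ring iota S ->
  regular_local_2 S x y ->
  quotient_field S ->
  dominates nu S ->
  nu x = 1 ->
  (x != 0 /\ y != 0 /\
     exists p1 q1 : nat, [/\ (0 < p1)%N, (0 < q1)%N, coprime p1 q1 &
                            nu y = p1%:R / q1%:R]) /\
  forall (T : nat -> K) (p q : nat -> nat) (n : nat -> nat -> nat)
         (lam : nat -> k) (i : nat),
    (0 < i)%N -> history iota nu x y T p q n lam i ->
    (exists nn : nat -> nat, ncond nu T q i nn) /\
    (forall nn1 nn2 : nat -> nat, ncond nu T q i nn1 -> ncond nu T q i nn2 ->
       forall j, (j < i)%N -> nn1 j = nn2 j) /\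
    forall nn : nat -> nat, ncond nu T q i nn ->
      (exists lam_i : k, is_residue iota nu (jump_ratio T q i nn) lam_i) /\
      (forall l1 l2 : k, is_residue iota nu (jump_ratio T q i nn) l1 ->
         is_residue iota nu (jump_ratio T q i nn) l2 -> l1 = l2) /\
      forall lam_i : k, is_residue iota nu (jump_ratio T q i nn) lam_i ->
        let T' := T i ^+ q i - iota lam_i * mprod T i nn in
        T' != 0 /\
        exists p' q' : nat, [/\ (0 < p')%N, (0 < q')%N, coprime p' q' &
          nu T' = (q i)%:R * nu (T i) + ((qprod q i)%:R)^-1 * (p'%:R / q'%:R)].
Proof.
move=> Hchar Hff Hval Hresk Halg Hreg Hqf Hdom Hx.
have HS := alg_subring Halg.
case: Hreg => Hnoeth Sx Sy [Hchain _] Hloc0.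
have Hloc : forall a, S a -> (~ unitS S a <-> mm S x y a) := Hloc0.
have mm_swap : forall a, mm S x y a <-> mm S y x a.
  by move=> a; split => [[s [t [Ss St ->]]]|[s [t [Ss St ->]]]]; exists t, s; split => //; rewrite addrC.
have HlocYX : forall a, S a -> (~ unitS S a <-> mm S y x a).
  by move=> a Sa; split => [/(Hloc a Sa).1 /mm_swap //| /mm_swap /(Hloc a Sa).2].
have [Hdom1 Hdom2] := Hdom.
have unit_nu0 : forall a, unitS S a -> nu a = 0.
  move=> a [Sa [a0 Sa']].
  have ai0 : a^-1 != 0 by rewrite invr_eq0.
  case: (Hdom1 a Sa) => [/eqP|h1]; first by rewrite (negbTE a0).
  case: (Hdom1 _ Sa') => [/eqP|h2]; first by rewrite (negbTE ai0).
  move: h2; rewrite (nuV Hval) // => h2; lra.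
have Hres : forall a, S a -> exists c, mm S x y (a - iota c).
  move=> a Sa; have [c Hc] := Hresk a (Hdom1 a Sa); exists c.
  have Sb : S (a - iota c) by exact: (SB' HS Sa (SC HS c)).
  apply: (Hloc _ Sb).1 => U; have := unit_nu0 _ U.
  have [_ [b0 _]] := U.
  by case: Hc => [/eqP|h]; [rewrite (negbTE b0) | move=> e; move: h; rewrite e ltxx].
have HresYX : forall a, S a -> exists c, mm S y x (a - iota c).
  by move=> a Sa; have [c Hc] := Hres a Sa; exists c; apply/mm_swap.
have coreXY := fun d => @core k K iota S x y HS Sx Sy Hloc Hnoeth Hres d.
have coreYX := fun d => @core k K iota S y x HS Sy Sx HlocYX Hnoeth HresYX d.
have noy : forall d c, S c -> y ^+ d = x * c -> False.
  by move=> d c Sc H; apply: (coreXY d) Hchain; exists c.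
have x0 : x != 0.
  apply/eqP => x0; apply: (coreYX 1%N) Hchain; exists 0; split; first exact: (S0 HS).
  by rewrite expr1 x0 mulr0.
have y0 : y != 0.
  by apply/eqP => y0; apply: (noy 1%N 0 (S0 HS)); rewrite expr1 y0 mulr0.
split.
  split => //; split => //.
  have My : mm S x y y by exists 0, 1; split; [exact: (S0 HS) | exact: (S1 HS) | ring].
  have := Hdom2 y Sy ((Hloc y Sy).2 My).
  case => [/eqP|ny]; first by rewrite (negbTE y0).
  exact: posrat ny.
move=> T p q n lam i Hi [[T0 T1] Tnz Hpq Hnu1 Hl].
pose w := fun j => nu (T j).
have Hw0 : w 0%N = 1 by rewrite /w T0.
have Hw1 : w 1%N = (p 1%N)%:R / (q 1%N)%:R := Hnu1.
have HwS : forall l, (0 < l < i)%N ->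
    w l.+1 = (q l)%:R * w l + ((qprod q l)%:R)^-1 * ((p l.+1)%:R / (q l.+1)%:R).
  by move=> l Hl'; have [_ _ _ H] := Hl l Hl'; exact: H.
have Hli : (0 < i <= i)%N by rewrite Hi leqnn.
have Hsum_pos : forall l nn, (0 < l <= i)%N -> ncond nu T q l nn -> (0 < nn 0%N)%N.
  by move=> l nn Hl' [Hnn Heq]; exact: (nn0_pos Hw0 Hpq Hw1 HwS Hi Hl' Hnn Heq).
have Ei : qprod q i = (qprod q i.-1 * q i)%N by rewrite -{1}(prednK Hi) ES prednK.
have e1 : (qprod q i.-1)%:R != 0 :> rat by apply: (E_neq0 Hpq); rewrite (leq_trans (leq_pred i)).
have qi0 : (q i)%:R != 0 :> rat by apply: (q_pos Hpq).
split.
  have [A HA] := F Hpq Hw1 HwS Hli.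
  pose z := (q i)%:Z * A + (p i)%:Z.
  have [nnz [Hnnz Hsz]] := repr Hw0 Hpq Hw1 HwS Hli z.
  have Hqw : (q i)%:R * w i = z%:~R / (qprod q i.-1)%:R.
    rewrite HA Ei natrM /z rmorphD rmorphM /= -!pmulrn.
    by field; rewrite e1 qi0.
  rewrite -Hqw in Hsz.
  have n0 := nn0_pos_int Hw0 Hpq Hw1 HwS Hi Hli Hnnz Hsz.
  have Hnonneg : forall j, (j < i)%N -> 0 <= nnz j.
    move=> j Hj; case: (posnP j) => [->|j0]; first exact: ltW.
    by have /andP [] := Hnnz j ltac:(by rewrite j0 Hj).
  exists (fun j => `|nnz j|%N); split.
    move=> j /andP [j0 ji]; have /andP [_ h] := Hnnz j ltac:(by rewrite j0 ji).
    by rewrite -ltz_nat gez0_abs // Hnonneg.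
  rewrite [LHS]Hsz; apply: eq_bigr => j _.
  by rewrite pmulrn gez0_abs // Hnonneg.
split.
  move=> nn1 nn2 [H1 E1] [H2 E2] j Hj.
  have Hd : forall j, (0 < j < i)%N -> (`|(nn1 j)%:Z - (nn2 j)%:Z| < q j)%N.
    move=> j' Hj'; have h1 := H1 j' Hj'; have h2 := H2 j' Hj'; lia.
  have Hs : \sum_(j < i) ((fun j => (nn1 j)%:Z - (nn2 j)%:Z) j)%:~R * w j = 0.
    rewrite (eq_bigr (fun j : 'I_i => (nn1 j)%:R * nu (T j) - (nn2 j)%:R * nu (T j))).
      by rewrite sumrB -E1 -E2 subrr.
    by move=> j' _; rewrite /= rmorphB /= -!pmulrn mulrBl.
  have := uniq_rep Hw0 Hpq Hw1 HwS Hli Hd Hs Hj.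
  by move=> /eqP; rewrite subr_eq0 => /eqP [].
move=> nn Hnc.
have [Hnn Heq] := Hnc.
have TnzI : forall j, (j < i)%N -> T j != 0 by move=> j Hj; apply: Tnz; apply: ltnW.
have [M0 nuM_] := nu_prod Hval nn TnzI.
have Ti0 : T i ^+ q i != 0 by rewrite expf_neq0 // Tnz.
have J0 : jump_ratio T q i nn != 0 by rewrite /jump_ratio mulf_neq0 ?invr_eq0.
have nuJ : nu (jump_ratio T q i nn) = 0.
  rewrite /jump_ratio (nuM Hval) ?invr_eq0 // (nuV Hval) // (nuX Hval) ?Tnz // nuM_ -Heq.
  by rewrite subrr.
split.
  by apply: Hresk; right; rewrite nuJ.
split.
  by move=> l1 l2; apply: (residue_unique Hval).
move=> lam_i Hr T'.
have HT' : T' = mprod T i nn * (jump_ratio T q i nn - iota lam_i).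
  by rewrite /T' /jump_ratio; field.
have HTl : forall l, (0 < l < i)%N ->
    T l.+1 = T l ^+ q l - iota (lam l) * mprod T l (n l) /\ (0 < n l 0%N)%N.
  move=> l Hl'; have [Hc _ HT _] := Hl l Hl'; split => //.
  apply: (Hsum_pos l) Hc.
  by case/andP: Hl' => -> /ltnW ->.
have [STall Hcong] := T_cong HS Sx Sy T0 T1 HTl (leqnn i).
have [e He] := Hcong Hi.
have [ST' Hc'] := step_cong HS Sx Sy (q i) lam_i T0 Hi (Hsum_pos i nn Hli Hnc) STall He.
have T'0 : T' != 0.
  apply/eqP => E0'.
  move: Hc'; rewrite -/T' E0' sub0r => [[c [Sc Hc]]].
  apply: (noy (e * q i)%N (- c)); first exact: (SN HS).
  by rewrite mulrN -Hc opprK.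
split => //.
have JL0 : jump_ratio T q i nn - iota lam_i != 0.
  by apply/eqP => h; move: T'0; rewrite HT' h mulr0 eqxx.
have rpos : 0 < nu (jump_ratio T q i nn - iota lam_i).
  by case: Hr => [/eqP|//]; rewrite (negbTE JL0).
have Epos : 0 < (qprod q i)%:R :> rat by rewrite ltr0n (E_gt0 Hpq (leqnn i)).
have [p' [q' [p0 q0 cop Hpq'']]] := posrat (mulr_gt0 Epos rpos).
exists p', q'; split => //.
rewrite HT' (nuM Hval) // nuM_ -Heq -Hpq''.
by field; rewrite gt_eqF.
Qed.
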